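(* Let $G$ be a finite group in $\mathfrak{Y}_n$. Then $G$ is either soluble or simple.
   Context: $\mathfrak{Y}_n$ denotes the class of all groups $G$ such that $N_G(A)=A$ for every non-abelian subgroup $A\le G$. *)

(* Defs.v *)
From mathcomp Require Import all_boot all_fingroup all_solvable.
Set Implicit Arguments. Unset Strict Implicit. Unset Printing Implicit Defensive.
Local Open Scope group_scope.

Definition in_Yn (gT : finGroupType) (G : {group gT}) : Prop :=
  forall A : {group gT}, A \subset G -> ~~ abelian A -> 'N_G(A) = A.

(* Main.v *)
Require Import Defs.
From mathcomp Require Import all_boot all_fingroup all_solvable.
From mathcomp Require Import ssralg finmodule.
Set Implicit Arguments. Unset Strict Implicit. Unset Printing Implicit Defensive.
Import GRing.Theory.
Local Open Scope group_scope.

Lemma transfer_fusion (gT aT : finGroupType) (G H : {group gT})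
  (f : {morphism H >-> aT}) (g : gT) :
  H \subset G -> abelian (f @* H) -> g \in H -> g \in G^`(1) ->
  (forall x k, x \in G -> (g ^+ k) ^ x \in H -> f ((g ^+ k) ^ x) = f (g ^+ k)) ->
  f g ^+ #|G : H| = 1.
Proof.
move=> sHG abH Hg G'g fus.
have Gg : g \in G by apply: subsetP Hg.
pose V := transfer_morphism G abH.
have V0 : transfer G abH g = 0%R.
  have : V g \in V @* G^`(1) by rewrite mem_morphim // (subsetP (der_sub 1 G)).
  rewrite morphim_der ?der_sub //.
  have -> : (V @* G)^`(1) = 1.
    by apply/derG1P/centsP=> u _ v _; apply: (@addrC _ u v).
  by move/set1P.
have trP := transversalP (rcosets_cycle_partition sHG Gg).
have := transfer_cycle_expansion sHG abH Gg trP.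
rewrite V0.
have := sum_index_rcosets_cycle sHG Gg trP.
set X := transversal _ _.
pose n x := #|<[g]> : H :* x|.
rewrite -/(\sum_(x in X) n x)%N => sumn.
rewrite (eq_bigr (fun x => FiniteModule.fmod abH (f g) *+ n x)%R); last first.
  move=> x Xx /=.
  have Gx : x \in G by apply: (subsetP (transversal_sub trP)).
  have Hc : (g ^+ n x) ^ x^-1 \in H.
    have := mulg_exp_card_rcosets H g x.
    by rewrite conjgE invgK mulgA -mem_rcoset.
  change (FiniteModule.fmod abH (f ((g ^+ n x) ^ x^-1)) = FiniteModule.fmod abH (f g) *+ n x)%R.
  by rewrite fus ?groupV // morphX // FiniteModule.fmodX ?mem_morphim.
rewrite GRing.sumrMnr sumn -FiniteModule.fmodX ?mem_morphim //.
move/(congr1 (@FiniteModule.fmval _ _ abH)).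
rewrite FiniteModule.fmodK ?groupX ?mem_morphim //.
Qed.
Lemma fusion_abelian_selfnorm (gT : finGroupType) (Q P : {group gT}) p h x :
  p.-Sylow(Q) P -> abelian P -> 'N_Q(P) \subset P ->
  h \in P -> x \in Q -> h ^ x \in P -> h ^ x = h.
Proof.
move=> sylP abP nPP Ph Qx Phx.
have sPQ := pHall_sub sylP.
set k := h ^ x.
have sPC : P \subset 'C_Q[k].
  by rewrite subsetI sPQ sub_cent1 (subsetP abP).
have sPxC : P :^ x \subset 'C_Q[k].
  have sPxQ : P :^ x \subset Q by rewrite -(conjGid Qx) conjSg.
  rewrite subsetI sPxQ /k cent1J conjSg.
  by rewrite sub_cent1 (subsetP abP).
have sCQ : 'C_Q[k] \subset Q := subsetIl _ _.
have syl1 : p.-Sylow('C_Q[k]) P := pHall_subl sPC sCQ sylP.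
have syl2 : p.-Sylow('C_Q[k]) (P :^ x).
  by apply: pHall_subl sPxC sCQ _; rewrite pHallJ.
have [c Cc defPx] := Sylow_trans syl1 syl2.
have [Qc cKc] : c \in Q /\ c \in 'C[k] by apply/setIP.
have nxc : x * c^-1 \in 'N_Q(P).
  rewrite inE groupM ?groupV //=; apply/normP.
  by rewrite conjsgM defPx -conjsgM mulgV conjsg1.
have Pn := subsetP nPP _ nxc.
have hx : h ^ x = h ^ c.
  have -> : x = (x * c^-1) * c by rewrite mulgKV.
  rewrite conjgM.
  have -> : h ^ (x * c^-1) = h.
    by rewrite conjgE (centsP abP _ Ph _ Pn) mulKg.
  by [].
rewrite /k hx; move: cKc; rewrite /k hx cent1J mem_conjg conjgE invgK mulgV mulg1.
move/cent1P => cch; by rewrite conjgE -cch mulKg.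
Qed.

Lemma abelian_selfnorm_Sylow_trivial (gT : finGroupType) (Q P : {group gT}) p :
  p.-Sylow(Q) P -> abelian P -> 'N_Q(P) \subset P -> Q \subset Q^`(1) -> P :=: 1.
Proof.
move=> sylP abP nPP sQQ'.
have sPQ := pHall_sub sylP.
apply/trivgP/subsetP => g Pg; apply/set1P.
have abI : abelian (idm P @* P) by rewrite morphim_idm.
have Qg : g \in Q := subsetP sPQ g Pg.
have fus : forall x k, x \in Q -> (g ^+ k) ^ x \in P ->
    idm P ((g ^+ k) ^ x) = idm P (g ^+ k).
  by move=> x k Qx Pgk; rewrite /= (fusion_abelian_selfnorm sylP) // groupX.
have := @transfer_fusion _ _ Q P (idm P) g sPQ abI Pg (subsetP sQQ' g Qg) fus.
rewrite /= => /eqP; rewrite -order_dvdn => dvd.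
have co : coprime #|P| #|Q : P| by case/andP: (pHall_Hall sylP).
have dvd2 : #[g] %| #|P| := order_dvdG Pg.
have {}dvd : (#[g] %| #|Q : P|)%N := dvd.
have : coprime #[g] #[g].
  exact: (coprime_dvdr dvd (coprime_dvdl dvd2 co)).
by rewrite /coprime gcdnn order_eq1 => /eqP.
Qed.

Lemma quo_selfnorm (gT : finGroupType) (G A M : {group gT}) :
  M <| G -> M \subset A -> A \subset G -> 'N_G(A) \subset A ->
  'N_(G / M)(A / M) \subset A / M.
Proof.
move=> nMG sMA sAG nAA.
have nMA : M <| A := normalS sMA sAG nMG.
apply/subsetP => _ /setIP[/morphimP[u Nu Gu ->] nAu].
have : u \in coset M @*^-1 'N(A / M) by apply/morphpreP; split.
move/(subsetP (morphpre_norm _ _)); rewrite quotientGK // => nu.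
by rewrite mem_quotient // (subsetP nAA) // inE Gu.
Qed.

Theorem theorem2p14 (gT : finGroupType) (G : {group gT}) :
  in_Yn G -> solvable G \/ simple G.
Proof.
move=> YG.
have nprop_ab : forall K : {group gT}, K <| G -> K :!=: G -> abelian K.
  move=> K nKG neKG; apply/negPn/negP => nabK.
  have := YG K (normal_sub nKG) nabK.
  rewrite (setIidPl (normal_norm nKG)) => eGK.
  by rewrite eGK eqxx in neKG.
case: (boolP (solvable G)) => [|nsolG]; [by left | right].
have perfG : G \subset G^`(1).
  case: (eqVneq G^`(1) G) => [-> // | neq].
  have ab := nprop_ab _ (der_normal 1 G) neq.
  by rewrite (series_sol (der_normal 1 G)) abelian_sol // abelian_sol
     ?sub_der1_abelian in nsolG.
have nGG' : G \subset 'N(G) := normG G.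
apply/simpleP; split.
  apply: contraNneq nsolG => G1; apply: abelian_sol.
  by rewrite G1 abelian1.
move=> N nNG; case: (eqsVneq N 1) => [-> | ntN]; [by left|].
case: (eqsVneq N G) => [-> | neNG]; [by right|].
exfalso.
have abN := nprop_ab N nNG neNG.
have sNG := normal_sub nNG.
have nNG' := normal_norm nNG.
have nG_N : forall H : {group gT}, H \subset G -> H \subset 'N(N).
  by move=> H sHG; apply: subset_trans sHG nNG'.
have perfQ : forall M : {group gT}, M <| G -> G / M \subset (G / M)^`(1).
  by move=> M nMG; rewrite -quotient_der ?normal_norm // quotientS.
case: (eqVneq 'C_G(N) G) => [cG | ncG].
  have cGN : G \subset 'C(N) by rewrite -cG subsetIr.
  have cNG : N \subset 'C(G) by rewrite centsC.
  have ltN : 1 < #|N| by rewrite ltnNge -trivg_card_le1.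
  set p := pdiv #|N|.
  have pr_p : prime p := pdiv_prime ltN.
  have [z Nz oz] := Cauchy pr_p (pdiv_dvd _).
  have Gz : z \in G := subsetP sNG z Nz.
  have cz : z \in 'C(G) := subsetP cNG z Nz.
  have pz : p.-group <[z]> by rewrite /pgroup -orderE oz pnat_id.
  have szG : <[z]> \subset G by rewrite cycle_subG.
  have [S sylS szS] := Sylow_superset szG pz.
  have sSG := pHall_sub sylS.
  have pS := pHall_pgroup sylS.
  have Sz : z \in S by rewrite -cycle_subG.
  have zS' : z \in S^`(1).
    pose f := restrm (der_norm 1 S) (coset S^`(1)).
    have abf : abelian (f @* S).
      by rewrite morphim_restrm setIid; exact: (der_abelian 0 S).
    have fus : forall x k, x \in G -> (z ^+ k) ^ x \in S -> f ((z ^+ k) ^ x) = f (z ^+ k).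
      move=> x k Gx _; congr (f _).
      have czk : z ^+ k \in 'C(G) by rewrite groupX.
      by rewrite conjgE (centP czk x Gx) mulKg.
    have := transfer_fusion sSG abf Sz (subsetP perfG z Gz) fus.
    rewrite /f /= -morphX // => /coset_idr.
    have nS' : z ^+ #|G : S| \in 'N(S^`(1)) by rewrite groupX // (subsetP (der_norm 1 S)).
    move/(_ nS') => zi.
    have co : coprime #|<[z]>| #|G : S|.
      case/and3P: sylS => _ _ p'i.
      by rewrite -orderE oz prime_coprime // -p'natE.
    by rewrite -(expgK co (cycle_id z)) groupX.
  have nabS : ~~ abelian S.
    apply/negP => /derG1P S1; move: zS'; rewrite S1 => /set1P z1.
    by move: oz; rewrite z1 order1 => p1; rewrite -p1 in pr_p.
  have propab : forall B : {group gT}, B \proper S -> abelian B.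
    move=> B prB; apply/negPn/negP => nabB.
    have sBG : B \subset G := subset_trans (proper_sub prB) sSG.
    have := nilpotent_proper_norm (pgroup_nil pS) prB.
    rewrite properE => /andP[_]; case/negP.
    by rewrite -{2}(YG B sBG nabB) setSI.
  have [x Sx ncx] : exists2 x, x \in S & x \notin 'C(S) by apply/subsetPn.
  have [y Sy ncy] : exists2 y, y \in S & y \notin 'C[x].
    by apply/subsetPn; rewrite sub_cent1.
  pose XY := (<[x]> <*> <[y]>)%G.
  have sXYS : XY \subset S by rewrite join_subG !cycle_subG Sx Sy.
  have nabXY : ~~ abelian XY.
    by rewrite abelianY !cycle_abelian /= cycle_subG; move: ncy; rewrite -cent_cycle.
  have eXY : XY :=: S.
    by case: (eqVproper sXYS) => // /propab; rewrite (negbTE nabXY).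
  have prx : <[x]> \proper S.
    rewrite properEneq cycle_subG Sx andbT.
    by apply: contraNneq nabS => <-; apply: cycle_abelian.
  have pry : <[y]> \proper S.
    rewrite properEneq cycle_subG Sy andbT.
    by apply: contraNneq nabS => <-; apply: cycle_abelian.
  have [X maxX sxX] := @maxgroup_exists _ (fun H : {group gT} => H \proper S) _ prx.
  have [Y maxY syY] := @maxgroup_exists _ (fun H : {group gT} => H \proper S) _ pry.
  have [prX maxXP] := maxgroupP maxX.
  have [prY _] := maxgroupP maxY.
  have abX := propab X prX.
  have abY := propab Y prY.
  have nXS := normal_norm (p_maximal_normal pS maxX).
  have nYS := normal_norm (p_maximal_normal pS maxY).
  have xX : x \in X by rewrite -cycle_subG.
  have yY : y \in Y by rewrite -cycle_subG.
  set c := [~ x, y].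
  have cX : c \in X.
    by apply: subsetP (mem_commg xX Sy); rewrite commg_subl.
  have cY : c \in Y.
    by apply: subsetP (mem_commg Sx yY); rewrite commg_subr.
  have XYS : X <*> Y = S :> {set gT}.
    have sJS : X <*> Y \subset S by rewrite join_subG !proper_sub.
    case: (eqVproper sJS) => // prJ.
    have := maxXP [group of X <*> Y] prJ (joing_subl _ _).
    move/(congr1 (fun H : {set gT} => y \in H)); rewrite /= mem_gen ?inE ?yY ?orbT //.
    move/esym => yX; case/negP: ncy; apply/cent1P.
    exact: (centsP abX).
  have cIS : forall w, w \in X -> w \in Y -> w \in 'C(S).
    move=> w wX wY; rewrite -sub_cent1 -XYS join_subG !sub_cent1.
    by rewrite (subsetP abX) ?(subsetP abY).
  have cC : c \in 'C(S) := cIS c cX cY.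
  have dS : S^`(1) = <[c]>.
    have := @der1_joing_cycles _ x y; rewrite /= -/c.
    by rewrite [_ <*> _]eXY => ->.
  have xpY : x ^+ p \in Y.
    apply: coset_idr; first by rewrite groupX // (subsetP nYS).
    have oSY : #|S / Y| = p by rewrite card_quotient // (p_maximal_index pS maxY).
    rewrite morphX ?(subsetP nYS) //= -oSY expg_cardG //.
    by rewrite mem_quotient.
  have cxp : x ^+ p \in 'C(S) := cIS _ (groupX _ xX) xpY.
  have cp : c ^+ p = 1.
    rewrite -commXg; last by apply/esym/(centP cC).
    by apply/eqP/commgP/(centP cxp).
  have sS'N : S^`(1) \subset N.
    have szc : <[z]> \subset <[c]> by rewrite cycle_subG; move: zS'; rewrite dS.
    have : #|<[c]>| <= #|<[z]>|.
      by rewrite -!orderE oz dvdn_leq ?prime_gt0 // order_dvdn cp.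
    move=> le; have /eqP ezc : <[z]> == <[c]> :> {set gT} by rewrite eqEcard szc le.
    by rewrite dS -ezc cycle_subG.
  pose A := (N <*> S)%G.
  have sAG : A \subset G by rewrite join_subG sNG sSG.
  have nabA : ~~ abelian A.
    by apply: contra nabS; apply: abelianS; exact: joing_subr.
  have := quo_selfnorm nNG (joing_subl _ _) sAG.
  rewrite (YG A sAG nabA) subxx => /(_ isT).
  have nSN := nG_N S sSG.
  rewrite /A quotientYidl // => nSb.
  have sylSb := quotient_pHall (H:=N) nSN sylS.
  have abSb : abelian (S / N) := sub_der1_abelian sS'N.
  have := abelian_selfnorm_Sylow_trivial sylSb abSb nSb (perfQ N nNG).
  move/eqP; rewrite -subG1 quotient_sub1 // => sSN.
  by case/negP: nabS; apply: abelianS sSN abN.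
set M := 'C_G(N).
have nMG : M <| G.
  apply: norm_normalI; apply: subset_trans nNG' _.
  exact: normal_norm (cent_normal N).
have abM := nprop_ab [group of M] nMG ncG.
have sNM : N \subset M by rewrite subsetI sNG.
have nMG' := normal_norm nMG.
have ntQ : G / M != 1.
  apply: contra ncG => /eqP Q1; rewrite eqEsubset subsetIl /=.
  by rewrite -(quotient_sub1 nMG') Q1.
have ltQ : 1 < #|G / M| by rewrite ltnNge -trivg_card_le1.
set p := pdiv #|G / M|.
have pr_p : prime p := pdiv_prime ltQ.
have [yb Qyb oyb] := Cauchy pr_p (pdiv_dvd _).
have [y Ny Gy def_yb] := morphimP Qyb.
have nyM : y \notin M.
  apply/negP => My; move: oyb; rewrite def_yb /= coset_id // order1.
  by move=> p1; rewrite -p1 in pr_p.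
pose A := (M <*> <[y]>)%G.
have sAG : A \subset G by rewrite join_subG normal_sub // cycle_subG.
have sMA : M \subset A := joing_subl _ _.
have nabA : ~~ abelian A.
  apply: contra nyM; rewrite abelianY cycle_abelian abM /= cycle_subG => cyM.
  by rewrite /M inE Gy /=; exact: (subsetP (centS sNM)) y cyM.
have nAA := YG A sAG nabA.
have := quo_selfnorm nMG sMA sAG; rewrite nAA subxx => /(_ isT).
have nyM' : <[y]> \subset 'N(M) by rewrite cycle_subG.
rewrite /A quotientYidl // quotient_cycle // -def_yb => nyb.
have pyb : p.-group <[yb]> by rewrite /pgroup -orderE oyb pnat_id.
have syb : <[yb]> \subset G / M by rewrite cycle_subG.
have [P sylP sYP] := Sylow_superset syb pyb.
have eYP : <[yb]> = P :> {set _}.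
  case: (eqVproper sYP) => // prYP.
  have := nilpotent_proper_norm (pgroup_nil (pHall_pgroup sylP)) prYP.
  rewrite properE => /andP[_]; case/negP.
  by apply: subset_trans _ nyb; rewrite setSI // (pHall_sub sylP).
have P1 := abelian_selfnorm_Sylow_trivial sylP.
rewrite -eYP cycle_abelian nyb perfQ // in P1.
have P1' := P1 isT isT isT.
have := cycle_id yb; rewrite P1' => /set1P yb1.
by rewrite yb1 order1 in oyb; rewrite -oyb in pr_p.
Qed.
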